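(* Let $A$ be a block tridiagonal matrix satisfying the standing hypotheses (H), write $A^{-1}=[Z_{ij}]$ with $Z_{ij}\in\mathbb{C}^{m\times m}$, and let $\tau_{i,t},\omega_{i,t}$ be as in the context. Then for each $t=1,\dots,n-1$: $$\|Z_{ij}\|\le\|Z_{jj}\|\prod_{k=i}^{j-1}\tau_{k,t}\quad\text{for all } i<j,\qquad \|Z_{ij}\|\le\|Z_{jj}\|\prod_{k=j+1}^{i}\omega_{k,t}\quad\text{for all } i>j,$$ and for $i=1,\dots,n$, $$\frac{\|I\|}{\|A_i\|+\tau_{i-1,t}\|C_{i-1}\|+\omega_{i+1,t}\|B_i\|}\le\|Z_{ii}\|,$$ and, whenever $\|A_i^{-1}\|^{-1}-\tau_{i-1,t}\|C_{i-1}\|-\omega_{i+1,t}\|B_i\|>0$, $$\|Z_{ii}\|\le\frac{\|I\|}{\|A_i^{-1}\|^{-1}-\tau_{i-1,t}\|C_{i-1}\|-\omega_{i+1,t}\|B_i\|},$$ where $C_0=B_n=0$ and $\tau_{0,t}=\omega_{n+1,t}=0$.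
   Context: $\|\cdot\|$ is a submultiplicative matrix norm on $\mathbb{C}^{m\times m}$, $n\ge 2$, and $A$ is block tridiagonal with diagonal blocks $A_1,\dots,A_n$, superdiagonal blocks $B_1,\dots,B_{n-1}$ (block $(i,i+1)$) and subdiagonal blocks $C_1,\dots,C_{n-1}$ (block $(i+1,i)$), all in $\mathbb{C}^{m\times m}$; set $C_0=B_n=0$. Standing hypotheses (H): $A$ is nonsingular; $B_i$ and $C_i$ are nonsingular for $i=1,\dots,n-1$; every $A_i$ is nonsingular and $\|A_i^{-1}C_{i-1}\|+\|A_i^{-1}B_i\|\le 1$ for $i=1,\dots,n$ (row block diagonal dominance); and $\|A_1^{-1}B_1\|<1$, $\|A_n^{-1}C_{n-1}\|<1$. For $i=1,\dots,n$: $\tau_i=\dfrac{\|A_i^{-1}B_i\|}{1-\|A_i^{-1}C_{i-1}\|}$, $\omega_i=\dfrac{\|A_i^{-1}C_{i-1}\|}{1-\|A_i^{-1}B_i\|}$. For $i=1,\dots,n$ and $t=1,\dots,n-1$ define recursively in $t$: $\tau_{i,t}=\tau_i$ if $t=1$; $\tau_{i,t}=\tau_{i,t-1}$ if $t>i$; otherwise $\tau_{i,t}=\dfrac{\|A_i^{-1}B_i\|}{1-\|A_i^{-1}C_{i-1}\|\,\tau_{i-1,t-1}}$. $\omega_{i,t}=\omega_i$ if $t=1$; $\omega_{i,t}=\omega_{i,t-1}$ if $n-t+1<i$; otherwise $\omega_{i,t}=\dfrac{\|A_i^{-1}C_{i-1}\|}{1-\|A_i^{-1}B_i\|\,\omega_{i+1,t-1}}$.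 *)

(* Defs.v *)
From HB Require Import structures.
From mathcomp Require Import all_boot all_order all_algebra.
Set Implicit Arguments. Unset Strict Implicit. Unset Printing Implicit Defensive.
Import Order.TTheory GRing.Theory Num.Theory.
Local Open Scope ring_scope.

Definition submult_mxnorm (C : numClosedFieldType) (m : nat) (N : 'M[C]_m -> C) : Prop :=
  [/\ forall X, 0 <= N X,
      forall X, N X = 0 -> X = 0,
      forall (c : C) X, N (c *: X) = `|c| * N X,
      forall X Y, N (X + Y) <= N X + N Y
    & forall X Y, N (X *m Y) <= N X * N Y].

(* Block (i,j) (0-based indices) of the block tridiagonal matrix whose blocks
   are given 1-based: diagonal Ad 1..n, superdiagonal Bd 1..n-1 (block (i,i+1)),
   subdiagonal Cd 1..n-1 (block (i+1,i)). *)
Definition tridiag_blk (C : numClosedFieldType) (m : nat)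
  (Ad Bd Cd : nat -> 'M[C]_m) (i j : nat) : 'M[C]_m :=
  if j == i then Ad i.+1
  else if j == i.+1 then Bd i.+1
  else if i == j.+1 then Cd j.+1
  else 0.

Definition blk_tridiag (C : numClosedFieldType) (m n : nat) (Ad Bd Cd : nat -> 'M[C]_m)
  : 'M[C]_(\sum_(i < n) m, \sum_(i < n) m) :=
  @mxblock C n n (fun _ => m) (fun _ => m) (fun i j => tridiag_blk Ad Bd Cd i j).

Definition blk (C : numClosedFieldType) (m n : nat)
  (Z : 'M[C]_(\sum_(i < n) m, \sum_(i < n) m)) (i j : 'I_n) : 'M[C]_m :=
  @submxblock C n n (fun _ => m) (fun _ => m) Z i j.

(* tau_{i,t}, 1-based i; a i = ||A_i^{-1} C_{i-1}||, b i = ||A_i^{-1} B_i||.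
   Convention tau_{0,t} = 0. *)
Fixpoint tau_it (C : numClosedFieldType) (a b : nat -> C) (t i : nat) : C :=
  if i == 0%N then 0 else
  match t with
  | 0%N => 0
  | t'.+1 =>
      if t' == 0%N then b i / (1 - a i)
      else if (i < t)%N then tau_it a b t' i
      else b i / (1 - a i * tau_it a b t' i.-1)
  end.

Fixpoint omega_it (C : numClosedFieldType) (n : nat) (a b : nat -> C) (t i : nat) : C :=
  if (n < i)%N then 0 else
  match t with
  | 0%N => 0
  | t'.+1 =>
      if t' == 0%N then a i / (1 - b i)
      else if ((n - t).+1 < i)%N then omega_it n a b t' i
      else a i / (1 - b i * omega_it n a b t' i.+1)
  end.

(* Main.v *)
Require Import Defs.
From HB Require Import structures.
From mathcomp Require Import all_boot all_order all_algebra.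
From mathcomp Require Import zify.
Import Order.TTheory GRing.Theory Num.Theory.
Local Open Scope ring_scope.

Lemma blk1 (C : numClosedFieldType) m n (i k : 'I_n) :
  blk (1%:M : 'M[C]_(\sum_(i < n) m)) i k = if i == k then 1%:M else 0.
Proof.
apply/matrixP => r s; rewrite /blk /submxblock !mxE.
rewrite -val_eqE /= tagnat.eq_Rank.
by case: (i == k); rewrite !mxE.
Qed.

Lemma blk_mul (C : numClosedFieldType) m n (Ad Bd Cd : nat -> 'M[C]_m) (Z : 'M[C]_(\sum_(i < n) m)) (i k : 'I_n) :
  blk (blk_tridiag n Ad Bd Cd *m Z) i k = \sum_(j < n) tridiag_blk Ad Bd Cd i j *m blk Z j k.
Proof.
rewrite /blk_tridiag -{1}(submxblockK Z) mul_mxblock /blk mxblockK //.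
Qed.

Lemma sum_eq1 (V : zmodType) n (F : 'I_n.+1 -> V) c :
  \sum_(j < n.+1 | (j:nat) == c) F j = if (c < n.+1)%N then F (inord c) else 0.
Proof.
case: ltnP => hc.
  rewrite (big_pred1 (inord c)) // => j /=.
  by rewrite -val_eqE /= inordK.
by rewrite big1 // => j /eqP jc; move: (ltn_ord j); rewrite jc ltnNge hc.
Qed.

Lemma row_eq (C : numClosedFieldType) m n (Ad Bd Cd : nat -> 'M[C]_m)
  (Z : 'M[C]_(\sum_(i < n.+1) m)) (i k : 'I_n.+1) :
  blk_tridiag n.+1 Ad Bd Cd *m Z = 1%:M ->
  Ad i.+1 *m blk Z i k
  + (if (i.+1 < n.+1)%N then Bd i.+1 *m blk Z (inord i.+1) k else 0)
  + \sum_(j < n.+1 | j.+1 == i :> nat) Cd i *m blk Z j k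
  = if i == k then 1%:M else 0.
Proof.
move=> H; rewrite -blk1 -H blk_mul.
rewrite [RHS](eq_bigr (fun j : 'I_n.+1 =>
   (if (j : nat) == i then Ad i.+1 *m blk Z j k else 0)
 + (if (j : nat) == i.+1 then Bd i.+1 *m blk Z j k else 0)
 + (if j.+1 == i :> nat then Cd i *m blk Z j k else 0))); last first.
  move=> j _; rewrite /tridiag_blk.
  case: (eqVneq (j : nat) i) => [->|ji].
    by rewrite (ltn_eqF (ltnSn i)) (gtn_eqF (ltnSn i)) !addr0.
  case: (eqVneq (j : nat) i.+1) => [->|ji1].
    by rewrite (gtn_eqF (ltn_trans (ltnSn i) (ltnSn _))) add0r addr0.
  case: (eqVneq (i : nat) j.+1) => [->|ij1].
    by rewrite add0r add0r.
  by rewrite mul0mx !addr0.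
rewrite big_split big_split /= -!big_mkcond /= !sum_eq1 ltn_ord inord_val //.
Qed.

Lemma unit_neq0 (C : numClosedFieldType) m (X : 'M[C]_m) :
  (0 < m)%N -> X \in unitmx -> X != 0.
Proof.
case: m X => // m' X _ U; apply/eqP => X0; move: U.
by rewrite X0 unitmxE det0 unitr0.
Qed.

Section Norm.
Variables (C : numClosedFieldType) (m : nat) (N : 'M[C]_m -> C).
Hypothesis HN : submult_mxnorm N.

Lemma N0 : N 0 = 0.
Proof. by case: HN => _ _ Hs _ _; rewrite -(scale0r 0) Hs normr0 mul0r. Qed.

Lemma NN X : N (- X) = N X.
Proof. by case: HN => _ _ Hs _ _; rewrite -scaleN1r Hs normrN normr1 mul1r. Qed.

Lemma Nge0 X : 0 <= N X.
Proof. by case: HN. Qed.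

Lemma NM X Y : N (X *m Y) <= N X * N Y.
Proof. by case: HN. Qed.

Lemma ND X Y : N (X + Y) <= N X + N Y.
Proof. by case: HN. Qed.

Lemma Npos X : (0 < m)%N -> X \in unitmx -> 0 < N X.
Proof.
move=> m0 U; rewrite lt_def Nge0 andbT; apply/eqP=> NX.
have X0 : X = 0 by case: HN => _ H _ _ _; apply: H.
by move: (unit_neq0 _ _ _ m0 U); rewrite X0 eqxx.
Qed.
End Norm.
Arguments N0 {C m N}. Arguments NN {C m N}. Arguments Nge0 {C m N}.
Arguments NM {C m N}. Arguments ND {C m N}. Arguments Npos {C m N}.

Lemma row_ineq (C : numClosedFieldType) m n (N : 'M[C]_m -> C) (Ad Bd Cd : nat -> 'M[C]_m)
  (Z : 'M[C]_(\sum_(i < n.+1) m)) (k : 'I_n.+1) p :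
  submult_mxnorm N -> blk_tridiag n.+1 Ad Bd Cd *m Z = 1%:M ->
  (1 <= p <= n.+1)%N -> Ad p \in unitmx -> p.-1 != k ->
  N (blk Z (inord p.-1) k) <=
    N (invmx (Ad p) *m Cd p.-1) * N (blk Z (inord p.-2) k)
  + N (invmx (Ad p) *m Bd p) * N (blk Z (inord p) k).
Proof.
move=> HN H /andP[p1 pn] U pk.
set i : 'I_n.+1 := inord p.-1.
have ip : (i : nat) = p.-1 by rewrite inordK //; lia.
have ip1 : i.+1 = p by rewrite ip; lia.
have := row_eq _ _ _ Ad Bd Cd Z i k H.
have -> : (i == k) = false by rewrite -val_eqE /= ip; apply/negbTE.
rewrite ip1.
set X := (if _ then _ else _).
set S := (\sum_(_ < _ | _) _).
move=> E.
have EZ : blk Z i k = - (invmx (Ad p) *m X + invmx (Ad p) *m S).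
  have E2 : Ad p *m blk Z i k = - (X + S).
    by apply/eqP; rewrite -addr_eq0 addrA E.
  have KK := mulKmx U (blk Z i k).
  by rewrite -KK E2 mulmxN mulmxDr.
rewrite EZ (NN HN) addrC; apply: le_trans (ND HN _ _) _; apply: lerD.
  rewrite /S; case: (posnP (i : nat)) => i0.
    rewrite big_pred0; last by move=> j; rewrite i0.
    by rewrite mulmx0 (N0 HN) mulr_ge0 ?(Nge0 HN).
  rewrite (eq_bigl (fun j : 'I_n.+1 => (j : nat) == i.-1)); last first.
    by move=> j /=; apply/eqP/eqP; lia.
  rewrite sum_eq1 ifT; last by lia.
  rewrite mulmxA -ip; apply: le_trans (NM HN _ _) _.
  by apply: ler_wpM2l; [exact: Nge0| rewrite ip].
rewrite /X; case: ifP => hp.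
  rewrite mulmxA; apply: le_trans (NM HN _ _) _.
  by apply: ler_wpM2l; first exact: Nge0.
by rewrite mulmx0 (N0 HN) mulr_ge0 ?(Nge0 HN).
Qed.

Lemma stepK (R : numFieldType) (a b u wm w wp : R) :
  0 <= a -> 0 <= b -> a + b <= 1 -> a < 1 -> 0 <= u -> u <= 1 ->
  w <= a * wm + b * wp -> a * wm <= a * u * w ->
  w <= b / (1 - a * u) * wp /\ 0 <= b / (1 - a * u) <= 1.
Proof.
move=> a0 b0 ab a1 u0 u1 hw hwm.
have au : a * u <= a by rewrite ler_piMr.
have D0 : 0 < 1 - a * u by rewrite subr_gt0; apply: le_lt_trans au a1.
split.
  rewrite mulrAC ler_pdivlMr // mulrC mulrBl mul1r lerBlDr.
  apply: le_trans hw _; rewrite addrC lerD2l.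
  exact: hwm.
apply/andP; split; first by rewrite divr_ge0 // ltW.
rewrite ler_pdivrMr // mul1r lerBrDr.
apply: le_trans (lerD (lexx b) au) _; by rewrite addrC.
Qed.

Lemma tau1 (C : numClosedFieldType) (a b : nat -> C) p :
  p != 0%N -> tau_it a b 1 p = b p / (1 - a p).
Proof. by case: p. Qed.

Lemma tauS (C : numClosedFieldType) (a b : nat -> C) t p :
  p != 0%N -> tau_it a b t.+2 p =
  if (p < t.+2)%N then tau_it a b t.+1 p else b p / (1 - a p * tau_it a b t.+1 p.-1).
Proof. by case: p. Qed.

Lemma tau_bound (C : numClosedFieldType) (a b w : nat -> C) q :
  (forall p, (1 <= p < q)%N -> w p <= a p * w p.-1 + b p * w p.+1) ->
  a 1%N = 0 ->
  (forall p, (1 <= p < q)%N -> [/\ 0 <= a p, 0 <= b p, a p + b p <= 1 & a p < 1]) ->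
  (forall p, 0 <= w p) ->
  forall t, (1 <= t)%N -> forall p, (1 <= p < q)%N ->
    w p <= tau_it a b t p * w p.+1 /\ 0 <= tau_it a b t p <= 1.
Proof.
move=> hrow a1 hab w0 [//|t] _.
elim: t => [|t IH].
  elim => [//|p IHp] /andP[_ pq].
  have [a0 b0 ab al1] := hab p.+1 (ltac:(apply/andP; split => //)).
  rewrite tau1 //.
  have := @stepK _ (a p.+1) (b p.+1) 1 (w p) (w p.+1) (w p.+2) a0 b0 ab al1 ler01 (lexx 1).
  rewrite mulr1; apply.
    by apply: hrow; lia.
  case: p IHp pq {a0 b0 ab al1} => [|p] IHp pq.
    by rewrite a1 !mul0r.
  have [h1 /andP[h2 h3]] := IHp (ltac:(apply/andP; split; [by [] | lia])).
  apply: ler_wpM2l; first by case: (hab p.+2 (ltac:(lia))).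
  apply: le_trans h1 _; rewrite ler_piMl //.
move=> p /andP[p1 pq].
rewrite tauS; last by lia.
case: ifP => pt; first by apply: IH; lia.
have [a0 b0 ab al1] := hab p (ltac:(lia)).
have [h1 /andP[h2 h3]] := IH p.-1 (ltac:(lia)).
apply: stepK => //.
  by apply: hrow; lia.
rewrite -mulrA; apply: ler_wpM2l => //.
by rewrite (prednK p1) in h1.
Qed.

Lemma omega1 (C : numClosedFieldType) n (a b : nat -> C) p :
  (p <= n)%N -> omega_it n a b 1 p = a p / (1 - b p).
Proof. by move=> pn; rewrite /= ltnNge pn. Qed.

Lemma omegaS (C : numClosedFieldType) n (a b : nat -> C) t p :
  (p <= n)%N -> omega_it n a b t.+2 p =
  if ((n - t.+2).+1 < p)%N then omega_it n a b t.+1 p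
  else a p / (1 - b p * omega_it n a b t.+1 p.+1).
Proof. by move=> pn; rewrite /= ltnNge pn. Qed.

Lemma omega_bound (C : numClosedFieldType) n (a b w : nat -> C) q :
  (forall p, (q < p <= n)%N -> w p <= a p * w p.-1 + b p * w p.+1) ->
  b n = 0 ->
  (forall p, (q < p <= n)%N -> [/\ 0 <= a p, 0 <= b p, a p + b p <= 1 & b p < 1]) ->
  (forall p, 0 <= w p) ->
  forall t, (1 <= t)%N -> forall p, (q < p <= n)%N ->
    w p <= omega_it n a b t p * w p.-1 /\ 0 <= omega_it n a b t p <= 1.
Proof.
move=> hrow bn hab w0 [//|t] _.
have hrow' : forall p, (q < p <= n)%N -> w p <= b p * w p.+1 + a p * w p.-1.
  by move=> p hp; rewrite addrC; apply: hrow.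
elim: t => [|t IH].
  suff : forall d p, (p + d = n)%N -> (q < p)%N ->
      w p <= omega_it n a b 1 p * w p.-1 /\ 0 <= omega_it n a b 1 p <= 1.
    by move=> H p /andP[qp pn]; apply: (H (n - p)%N); lia.
  elim => [|d IHd] p pd qp.
    have [a0 b0 ab bl1] := hab p (ltac:(lia)).
    rewrite omega1; last by lia.
    have := @stepK _ (b p) (a p) 1 (w p.+1) (w p) (w p.-1) b0 a0 (ltac:(by rewrite addrC)) bl1 ler01 (lexx 1).
    rewrite mulr1; apply; first by apply: hrow'; lia.
    by rewrite addn0 in pd; rewrite pd bn !mul0r.
  have [a0 b0 ab bl1] := hab p (ltac:(lia)).
  rewrite omega1; last by lia.
  have := @stepK _ (b p) (a p) 1 (w p.+1) (w p) (w p.-1) b0 a0 (ltac:(by rewrite addrC)) bl1 ler01 (lexx 1).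
  rewrite mulr1; apply; first by apply: hrow'; lia.
  have [h1 /andP[h2 h3]] := IHd p.+1 (ltac:(lia)) (ltac:(lia)).
  apply: ler_wpM2l => //.
  apply: le_trans h1 _; rewrite ler_piMl //.
move=> p /andP[qp pn].
rewrite omegaS //.
case: ifP => pt; first by apply: IH; lia.
move: pt => /negbT; rewrite -leqNgt => pt.
have [a0 b0 ab bl1] := hab p (ltac:(lia)).
case: (ltnP p n) => pn'.
  have [h1 /andP[h2 h3]] := IH p.+1 (ltac:(lia)).
  apply: stepK => //.
  - by rewrite addrC.
  - by apply: hrow'; lia.
  rewrite -mulrA; apply: ler_wpM2l => //.
have pn2 : p = n by lia.
have om0 : omega_it n a b t.+1 p.+1 = 0 by rewrite /= pn2 ltnSn.
rewrite om0; apply: stepK => //.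
- by rewrite addrC.
- by apply: hrow'; lia.
by rewrite pn2 bn !mul0r.
Qed.

Lemma chain_up (C : numClosedFieldType) (w tau : nat -> C) i j :
  (forall p, (i <= p < j)%N -> w p <= tau p * w p.+1 /\ 0 <= tau p) ->
  (i <= j)%N -> w i <= w j * \prod_(i <= k < j) tau k.
Proof.
elim: j => [|j IH] H ij.
  have -> : i = 0%N by lia.
  by rewrite big_geq // mulr1.
case: (ltnP i j.+1) => ij'; last first.
  have -> : i = j.+1 by lia.
  by rewrite big_geq // mulr1.
have P0 : 0 <= \prod_(i <= k < j) tau k.
  by rewrite big_seq_cond prodr_ge0 // => k /andP[]; rewrite mem_iota => /andP[h1 h2] _; case: (H k (ltac:(lia))).
rewrite big_nat_recr /=; last by lia.
have [h1 h2] := H j (ltac:(lia)).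
apply: le_trans (IH (fun p hp => H p (ltac:(lia))) (ltac:(lia))) _.
rewrite [_ * tau j]mulrC mulrA; apply: ler_wpM2r => //.
by rewrite mulrC.
Qed.

Lemma chain_down (C : numClosedFieldType) (w om : nat -> C) i j :
  (forall p, (j < p <= i)%N -> w p <= om p * w p.-1 /\ 0 <= om p) ->
  (j <= i)%N -> w i <= w j * \prod_(j.+1 <= k < i.+1) om k.
Proof.
elim: i => [|i IH] H ji.
  have -> : j = 0%N by lia.
  by rewrite big_geq // mulr1.
case: (ltnP j i.+1) => ji'; last first.
  have -> : j = i.+1 by lia.
  by rewrite big_geq // mulr1.
have P0 : 0 <= \prod_(j.+1 <= k < i.+1) om k.
  by rewrite big_seq_cond prodr_ge0 // => k /andP[]; rewrite mem_iota => /andP[h1 h2] _; case: (H k (ltac:(lia))).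
rewrite big_nat_recr /=; last by lia.
have [h1 h2] := H i.+1 (ltac:(lia)).
apply: le_trans h1 _.
rewrite [_ * om i.+1]mulrC mulrA [w j * _]mulrC -mulrA; apply: ler_wpM2l => //.
by apply: IH; [move=> p hp; apply: H; lia | lia].
Qed.

Lemma diag_low (R : numFieldType) (w n1 aw x s c bb na : R) :
  0 <= w -> 0 <= na -> 0 <= c -> 0 <= bb ->
  n1 <= aw + x + s -> aw <= na * w -> x <= bb * w -> s <= c * w ->
  n1 / (na + c + bb) <= w.
Proof.
move=> w0 na0 c0 bb0 h ha hx hs.
have D0 : 0 <= na + c + bb by rewrite !addr_ge0.
case: (eqVneq (na + c + bb) 0) => [->|Dn]; first by rewrite invr0 mulr0.
have Dp : 0 < na + c + bb by rewrite lt_def Dn D0.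
rewrite ler_pdivrMr // mulrC !mulrDl.
apply: le_trans h _; rewrite -[na * w + c * w + bb * w]addrA [c * w + bb * w]addrC addrA.
by rewrite !lerD.
Qed.

Lemma diag_up (R : numFieldType) (v w n1 x s c bb : R) :
  0 < v -> w <= v * (n1 + x + s) -> x <= bb * w -> s <= c * w ->
  0 < v^-1 - c - bb -> w <= n1 / (v^-1 - c - bb).
Proof.
move=> v0 h hx hs D0.
have h2 : w / v <= n1 + x + s by rewrite ler_pdivrMr // mulrC.
rewrite ler_pdivlMr // !mulrBr !lerBlDr.
apply: le_trans h2 _; rewrite [w * bb]mulrC [w * c]mulrC.
by rewrite !lerD.
Qed.

Theorem theorem2p7 (C : numClosedFieldType) (m n : nat) (N : 'M[C]_m -> C)
  (Ad Bd Cd : nat -> 'M[C]_m) :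
  submult_mxnorm N ->
  (0 < m)%N -> (2 <= n)%N ->
  Cd 0%N = 0 -> Bd n = 0 ->
  blk_tridiag n Ad Bd Cd \in unitmx ->
  (forall i, (1 <= i < n)%N -> Bd i \in unitmx /\ Cd i \in unitmx) ->
  (forall i, (1 <= i <= n)%N ->
     Ad i \in unitmx /\
     N (invmx (Ad i) *m Cd i.-1) + N (invmx (Ad i) *m Bd i) <= 1) ->
  N (invmx (Ad 1%N) *m Bd 1%N) < 1 ->
  N (invmx (Ad n) *m Cd n.-1) < 1 ->
  let a := fun i => N (invmx (Ad i) *m Cd i.-1) in
  let b := fun i => N (invmx (Ad i) *m Bd i) in
  let tau := fun i t => tau_it a b t i in
  let omega := fun i t => omega_it n a b t i in
  let Z := blk (invmx (blk_tridiag n Ad Bd Cd)) in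
  forall t, (1 <= t <= n.-1)%N ->
  (* blocks are indexed by 0-based ordinals i : 'I_n (block i is Z_{i+1,.}),
     while tau, omega, Ad, Bd, Cd are 1-based *)
  [/\ (forall i j : 'I_n, (i < j)%N ->
         N (Z i j) <= N (Z j j) * \prod_(i.+1 <= k < j.+1) tau k t),
      (forall i j : 'I_n, (j < i)%N ->
         N (Z i j) <= N (Z j j) * \prod_(j.+2 <= k < i.+2) omega k t),
      (forall i : 'I_n,
         N 1%:M / (N (Ad i.+1) + tau i t * N (Cd i) + omega i.+2 t * N (Bd i.+1))
           <= N (Z i i))
    & (forall i : 'I_n,
         0 < (N (invmx (Ad i.+1)))^-1 - tau i t * N (Cd i) - omega i.+2 t * N (Bd i.+1) ->
         N (Z i i) <= N 1%:M / ((N (invmx (Ad i.+1)))^-1 - tau i t * N (Cd i)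
                                - omega i.+2 t * N (Bd i.+1)))].

Proof.
case: n => [|n]; first by move=> _ _ n2.
move=> HN m0 n2 C0 Bn Au Hbc Had Hb1 Han a b tau omega Z t /andP[t1 tn].
have Hinv : blk_tridiag n.+1 Ad Bd Cd *m invmx (blk_tridiag n.+1 Ad Bd Cd) = 1%:M.
  exact: mulmxV.
have a1 : a 1%N = 0 by rewrite /a /= C0 mulmx0 (N0 HN).
have bn : b n.+1 = 0 by rewrite /b Bn mulmx0 (N0 HN).
have hab : forall p, (1 <= p <= n.+1)%N -> [/\ 0 <= a p, 0 <= b p & a p + b p <= 1].
  move=> p hp; have [_ h] := Had p hp.
  by split => //; apply: Nge0.
have bpos : forall p, (1 <= p < n.+1)%N -> 0 < b p.
  move=> p hp; apply: (Npos HN _ m0).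
  by rewrite unitmx_mul unitmx_inv (proj1 (Had p (ltac:(lia)))) (proj1 (Hbc p hp)).
have apos : forall p, (2 <= p <= n.+1)%N -> 0 < a p.
  move=> p hp; apply: (Npos HN _ m0).
  by rewrite unitmx_mul unitmx_inv (proj1 (Had p (ltac:(lia)))) (proj2 (Hbc p.-1 (ltac:(lia)))).
pose w (k : 'I_n.+1) p := N (Z (inord p.-1) k).
have w0 : forall k p, 0 <= w k p by move=> k p; apply: Nge0.
have hrow : forall (k : 'I_n.+1) p, (1 <= p <= n.+1)%N -> p.-1 != k ->
    w k p <= a p * w k p.-1 + b p * w k p.+1.
  move=> k p hp pk; rewrite /w /a /b.
  by apply: (row_ineq _ _ _ _ Ad Bd Cd _ k p HN Hinv hp (proj1 (Had p hp)) pk).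
have UB : forall (k : 'I_n.+1) p, (1 <= p < k.+1)%N ->
    w k p <= tau p t * w k p.+1 /\ 0 <= tau p t <= 1.
  move=> k; apply: (tau_bound _ a b (w k) k.+1) => //.
  - by move=> p hp; move: (ltn_ord k) => kn; apply: hrow; lia.
  - move=> p hp; move: (ltn_ord k) => kn; have [h1 h2 h3] := hab p (ltac:(lia)).
    split => //; apply: lt_le_trans h3; rewrite ltrDl; apply: bpos; lia.
have LB : forall (k : 'I_n.+1) p, (k.+1 < p <= n.+1)%N ->
    w k p <= omega p t * w k p.-1 /\ 0 <= omega p t <= 1.
  move=> k; apply: (omega_bound _ n.+1 a b (w k) k.+1) => //.
  - by move=> p hp; move: (ltn_ord k) => kn; apply: hrow; lia.
  - move=> p hp; move: (ltn_ord k) => kn; have [h1 h2 h3] := hab p (ltac:(lia)).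
    split => //; apply: lt_le_trans h3; rewrite ltrDr; apply: apos; lia.
have wE : forall (i k : 'I_n.+1), w k i.+1 = N (Z i k) by move=> i k; rewrite /w /= inord_val.
have tau0 : forall t', tau 0%N t' = 0 by case.
have omout : forall t' p, (n.+1 < p)%N -> omega p t' = 0.
  by move=> [|t'] p hp; rewrite /omega /= hp.
split.
- move=> i j ij; rewrite -!wE.
  apply: (chain_up _ (w j) (fun k => tau k t)); last by lia.
  move=> p hp; have [h1 /andP[h2 _]] := UB j p (ltac:(lia)).
  by split.
- move=> i j ij; rewrite -!wE.
  apply: (chain_down _ (w j) (fun k => omega k t)); last by lia.
  move=> p hp; move: (ltn_ord i) => iN.
  have [h1 /andP[h2 _]] := LB j p (ltac:(lia)).
  by split.
all: move=> i; have E := row_eq _ _ _ Ad Bd Cd _ i i Hinv.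
all: rewrite eqxx in E.
all: move: E; set X := (if _ then _ else _); set S := (\sum_(_ < _ | _) (Cd i *m _)) => E.
all: have XB : N X <= omega i.+2 t * N (Bd i.+1) * N (Z i i).
1,3: rewrite /X; case: ifP => hi.
1,3: apply: le_trans (NM HN _ _) _;
  have [h1 /andP[h2 _]] := LB i i.+2 (ltac:(lia));
  rewrite [omega _ _ * _]mulrC -mulrA; apply: ler_wpM2l; [exact: Nge0|];
  by rewrite -wE.
1,2: rewrite (N0 HN); case: (leqP i.+2 n.+1) => hi2; last by rewrite omout // !mul0r.
1,2: have [_ /andP[h2 _]] := LB i i.+2 (ltac:(lia)).
1,2: by rewrite !mulr_ge0 //; apply: Nge0.
all: have SB : N S <= tau i t * N (Cd i) * N (Z i i).
1,3: rewrite /S; case: (posnP (i : nat)) => i0.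
1,3: rewrite big_pred0; last by move=> j; rewrite i0.
1,2: by rewrite (N0 HN) i0 tau0 !mul0r.
1,2: rewrite (eq_bigl (fun j : 'I_n.+1 => (j : nat) == i.-1)); last by move=> j /=; apply/eqP/eqP; lia.
1,2: rewrite sum_eq1 ifT; last by move: (ltn_ord i); lia.
1,2: apply: le_trans (NM HN _ _) _;
  have [h1 /andP[h2 _]] := UB i i (ltac:(lia));
  rewrite [tau _ _ * _]mulrC -mulrA; apply: ler_wpM2l; [exact: Nge0|];
  by rewrite -wE.
- apply: (diag_low _ _ _ (N (Ad i.+1 *m Z i i)) (N X) (N S)) => //.
  + exact: Nge0.
  + exact: Nge0.
  + have h2 : 0 <= tau i t.
      case: (posnP (i : nat)) => i0; first by rewrite i0 tau0.
      by have [_ /andP[]] := UB i i (ltac:(lia)).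
    by rewrite mulr_ge0 //; apply: Nge0.
  + case: (leqP i.+2 n.+1) => hi2; last by rewrite omout // mul0r.
    have [_ /andP[h2 _]] := LB i i.+2 (ltac:(lia)).
    by rewrite mulr_ge0 //; apply: Nge0.
  + by rewrite -E; apply: le_trans (ND HN _ _) _; rewrite lerD2r; apply: ND.
  + exact: NM.
- move=> D0.
  have [U _] := Had i.+1 (ltac:(move: (ltn_ord i); lia)).
  have Ainv : invmx (Ad i.+1) \in unitmx by rewrite unitmx_inv.
  apply: (diag_up _ (N (invmx (Ad i.+1))) _ _ (N X) (N S)) => //.
  + exact: (Npos HN _ m0).
  + have E2 : Ad i.+1 *m Z i i = 1%:M - (X + S) by apply/eqP; rewrite eq_sym subr_eq addrA E.
    have KK := mulKmx U (Z i i).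
    rewrite -KK E2; apply: le_trans (NM HN _ _) _; apply: ler_wpM2l; first exact: Nge0.
    apply: le_trans (ND HN _ _) _; rewrite (NN HN) -addrA lerD2l; exact: ND.
Qed.
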